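(* Let $c_1\ge\dots\ge c_m\ge0$ and $d_1\ge\dots\ge d_m\ge0$ be integers with $(c_1,\dots,c_m)\ne(d_1,\dots,d_m)$, and set $c_0=d_0=+\infty$. Let $\ell=\max\{i: c_i\ne d_i\}$, $f=\max\{i\in\{1,\dots,\ell\}: c_i<d_{i-1}\}$, $f'=\max\{i\in\{1,\dots,\ell\}: d_i<c_{i-1}\}$. Let $(r_1,r_2,\dots)$ and $(s_1,s_2,\dots)$ be the conjugate partitions of $(c_1,\dots,c_m)$ and $(d_1,\dots,d_m)$, $r_0=s_0=m$, $x=\min\{i: r_i\ne s_i\}$, $e=\min\{i\ge x-1: s_{i+1}\ge r_{i+1}\}$ and $e'=\min\{i\ge x-1: r_{i+1}\ge s_{i+1}\}$. Then $e=c_f$ and $e'=d_{f'}$.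
   Context: The conjugate of a finite nonincreasing sequence $(a_1,\dots,a_n)$ of nonnegative integers is $(\bar a_1,\bar a_2,\dots)$ with $\bar a_k=\#\{i: a_i\ge k\}$, $k\ge1$. *)

(* Defs.v *)
From mathcomp Require Import all_boot.
Set Implicit Arguments. Unset Strict Implicit. Unset Printing Implicit Defensive.

(* A finite nonincreasing sequence (a_1,...,a_m) is a [seq nat] [a];
   the 1-indexed entry a_i (1 <= i <= m) is [entry a i]. *)
Definition entry (a : seq nat) (i : nat) : nat := nth 0 a i.-1.

(* The entry a_i extended by the convention a_0 = +oo:
   [None] stands for +oo. *)
Definition xentry (a : seq nat) (i : nat) : option nat :=
  if i is 0 then None else Some (entry a i).

Definition xlt (x y : option nat) : bool :=
  match x, y with
  | Some u, Some v => u < v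
  | Some _, None => true
  | None, _ => false
  end.

(* Conjugate: abar_k = #{i : a_i >= k}, for k >= 1.
   Note [conjugate a 0 = size a = m], matching the convention r_0 = m. *)
Definition conjugate (a : seq nat) (k : nat) : nat := count (fun ai => k <= ai) a.

(* Main.v *)
Require Import Defs.
From mathcomp Require Import all_boot zify.
Set Implicit Arguments. Unset Strict Implicit. Unset Printing Implicit Defensive.

Lemma cnt_ge a k j : sorted geq a -> j <= size a ->
  (j <= count (fun ai => k <= ai) a) = (j == 0) || (k <= entry a j).
Proof.
elim: a j => [|y a IH] [|j] //= Hs Hj.
have Hs' := path_sorted Hs.
have Hall : all (fun z => z <= y) a.
  have tr : transitive geq by move=> u v w /= h1 h2; exact: leq_trans h2 h1.
  exact: (order_path_min tr Hs).
rewrite /entry /=.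
case: (leqP k y) => Hky.
  rewrite add1n ltnS IH //; case: j Hj => [|j] Hj //=; by rewrite Hky.
have -> : count (fun ai => k <= ai) a = 0.
  apply/eqP; rewrite -leqn0 leqNgt -has_count; apply/hasPn => z Hz.
  move/allP: Hall => /(_ z Hz) Hzy; rewrite -ltnNge; exact: leq_ltn_trans Hzy Hky.
have : nth 0 (y :: a) j \in y :: a by apply: mem_nth.
rewrite in_cons => /orP [/eqP ->|Hz]; first by rewrite [k <= y]leqNgt Hky.
move/allP: Hall => /(_ _ Hz) Hzy.
by rewrite [k <= _]leqNgt (leq_ltn_trans Hzy Hky).
Qed.

Lemma entry_mono a i j : sorted geq a -> i <= j -> j <= size a -> entry a j <= entry a i.
Proof.
move=> Hs Hij Hj; case: j Hij Hj => [|j] Hij Hj.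
  by move: Hij; rewrite leqn0 => /eqP ->.
rewrite /entry.
have tr : transitive geq by move=> u v w /= h1 h2; exact: leq_trans h2 h1.
have := @sorted_leq_nth _ geq tr (fun u => leqnn u) 0 a Hs i.-1 j.
rewrite !inE; apply; lia.
Qed.

Lemma cnt_le a k : count (fun ai => k <= ai) a <= size a.
Proof. exact: count_size. Qed.

Lemma cnt_mono a b m k : size a = m -> size b = m -> sorted geq a -> sorted geq b ->
  (forall j, 1 <= j <= m -> k <= entry a j -> k <= entry b j) ->
  count (fun ai => k <= ai) a <= count (fun ai => k <= ai) b.
Proof.
move=> Ha Hb Sa Sb H.
have Hle : count (fun ai => k <= ai) a <= size a := count_size _ _.
have := cnt_ge k Sa Hle; rewrite leqnn.
rewrite Ha in Hle; move: Hle.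
case E: (count _ a) => [|n] //= Hle Hk.
rewrite cnt_ge //; last by rewrite Hb.
apply/orP; right; apply: H => //; lia.
Qed.

Lemma half m c d l f x e : size c = m -> size d = m -> sorted geq c -> sorted geq d ->
 (1 <= l <= m /\ entry c l <> entry d l /\ forall i, l < i <= m -> entry c i = entry d i) ->
 (1 <= f <= l /\ xlt (xentry c f) (xentry d f.-1) /\ forall i, f < i <= l -> ~~ xlt (xentry c i) (xentry d i.-1)) ->
 (conjugate c x <> conjugate d x /\ forall i, i < x -> conjugate c i = conjugate d i) ->
 (x.-1 <= e /\ conjugate c e.+1 <= conjugate d e.+1 /\ forall i, x.-1 <= i < e -> conjugate d i.+1 < conjugate c i.+1) ->
 e = entry c f.
Proof.
move=> Hc Hd Sc Sd [Hl1 [Hl2 Hl3]] [Hf1 [Hf2 Hf3]] [Hx1 Hx2] [He1 [He2 He3]].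
rewrite /conjugate in Hx1 Hx2 He2 He3.
have Hfl : 1 < f -> entry c f < entry d f.-1.
  by case: f Hf1 Hf2 {Hf3} => [|[|f0]].
have Hfi : forall i, f < i <= l -> entry d i.-1 <= entry c i.
  move=> i Hi; have := Hf3 i Hi; case: i Hi => [|[|i0]] Hi; try lia.
  by rewrite /= -leqNgt.
set m0 := minn (entry c l) (entry d l).
have Heq : forall k, k <= m0 -> count (fun ai => k <= ai) c = count (fun ai => k <= ai) d.
  move=> k Hk; apply/eqP; rewrite eqn_leq; apply/andP; split.
  - apply: (cnt_mono Hc Hd Sc Sd) => j Hj Hkj.
    case: (leqP j l) => Hjl.
      have := entry_mono Sd Hjl (_ : l <= size d); lia.
    by rewrite -Hl3 //; lia.
  - apply: (cnt_mono Hd Hc Sd Sc) => j Hj Hkj.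
    case: (leqP j l) => Hjl.
      have := entry_mono Sc Hjl (_ : l <= size c); lia.
    by rewrite Hl3 //; lia.
have Hneq : count (fun ai => m0.+1 <= ai) c <> count (fun ai => m0.+1 <= ai) d.
  have Hlc : l <= size c by lia.
  have Hld : l <= size d by lia.
  have A := cnt_ge m0.+1 Sc Hlc; have B := cnt_ge m0.+1 Sd Hld.
  have Hl0 : (l == 0) = false by lia.
  rewrite Hl0 /= in A B.
  case: (ltngtP (entry c l) (entry d l)) => Hcd; last by [].
  - have : (l <= count (fun ai => m0.+1 <= ai) c) = false by rewrite A; lia.
    have : (l <= count (fun ai => m0.+1 <= ai) d) = true by rewrite B; lia.
    move=> H1 H2 E; by rewrite E H1 in H2.
  - have : (l <= count (fun ai => m0.+1 <= ai) c) = true by rewrite A; lia.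
    have : (l <= count (fun ai => m0.+1 <= ai) d) = false by rewrite B; lia.
    move=> H1 H2 E; by rewrite E H1 in H2.
have Hx : x = m0.+1.
  case: (ltngtP x m0.+1) => H //.
  - by exfalso; apply: Hx1; apply: Heq; lia.
  - by exfalso; apply: Hneq; apply: Hx2.
rewrite Hx /= in He1 He3.
have Hcf : m0 <= entry c f by have := entry_mono Sc (_ : f <= l) (_ : l <= size c); lia.
have HA : count (fun ai => (entry c f).+1 <= ai) c <= count (fun ai => (entry c f).+1 <= ai) d.
  apply: (cnt_mono Hc Hd Sc Sd) => j Hj Hkj.
  case: (ltnP j f) => Hjf.
    have H1 := Hfl (_ : 1 < f).
    have := entry_mono Sd (_ : j <= f.-1) (_ : f.-1 <= size d); lia.
  have := entry_mono Sc Hjf (_ : j <= size c); lia.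
have HB : forall k, m0 < k <= entry c f -> count (fun ai => k <= ai) d < count (fun ai => k <= ai) c.
  move=> k Hk.
  set j := count (fun ai => k <= ai) d.
  have Hjm : j <= size d by apply: count_size.
  have Bd := cnt_ge k Sd Hjm; rewrite leqnn in Bd.
  clearbody j.
  case: (ltnP j f) => Hjf.
    have Hj1 : j.+1 <= size c by lia.
    rewrite (cnt_ge k Sc Hj1) /=.
    have := entry_mono Sc (_ : j.+1 <= f) (_ : f <= size c); lia.
  have Hkd : k <= entry d j by move: Bd => /esym/orP [/eqP H|//]; lia.
  case: (ltnP j l) => Hjl.
    have Hj1 : j.+1 <= size c by lia.
    rewrite (cnt_ge k Sc Hj1) /=.
    have := Hfi j.+1; rewrite succnK; lia.
  exfalso.
  have Hdl := entry_mono Sd Hjl (_ : j <= size d).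
  have Hcl : k <= entry c l.
    case: (ltngtP f l) => Hfl'; try lia.
      have := Hfi l (_ : f < l <= l).
      have := entry_mono Sd (_ : l.-1 <= j) (_ : j <= size d); lia.
    by rewrite -Hfl'; lia.
  lia.
case: (ltngtP e (entry c f)) => H //.
- have := HB e.+1; lia.
- have := He3 (entry c f); lia.
Qed.
Theorem lemma4p6 (m : nat) (c d : seq nat) (l f f' x e e' : nat) :
  size c = m -> size d = m ->
  sorted geq c -> sorted geq d ->
  c <> d ->
  (* l = max {i : c_i <> d_i} *)
  (1 <= l <= m /\ entry c l <> entry d l /\
     forall i, l < i <= m -> entry c i = entry d i) ->
  (* f = max {i in 1..l : c_i < d_(i-1)},  with d_0 = +oo *)
  (1 <= f <= l /\ xlt (xentry c f) (xentry d f.-1) /\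
     forall i, f < i <= l -> ~~ xlt (xentry c i) (xentry d i.-1)) ->
  (* f' = max {i in 1..l : d_i < c_(i-1)},  with c_0 = +oo *)
  (1 <= f' <= l /\ xlt (xentry d f') (xentry c f'.-1) /\
     forall i, f' < i <= l -> ~~ xlt (xentry d i) (xentry c i.-1)) ->
  (* r = conjugate c, s = conjugate d, r_0 = s_0 = m;
     x = min {i : r_i <> s_i} *)
  (conjugate c x <> conjugate d x /\
     forall i, i < x -> conjugate c i = conjugate d i) ->
  (* e = min {i >= x-1 : s_(i+1) >= r_(i+1)} *)
  (x.-1 <= e /\ conjugate c e.+1 <= conjugate d e.+1 /\
     forall i, x.-1 <= i < e -> conjugate d i.+1 < conjugate c i.+1) ->
  (* e' = min {i >= x-1 : r_(i+1) >= s_(i+1)} *)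
  (x.-1 <= e' /\ conjugate d e'.+1 <= conjugate c e'.+1 /\
     forall i, x.-1 <= i < e' -> conjugate c i.+1 < conjugate d i.+1) ->
  e = entry c f /\ e' = entry d f'.
Proof.
move=> Hc Hd Sc Sd Hne [Hl1 [Hl2 Hl3]] Hf Hf' [Hx1 Hx2] He He'.
split.
- exact: (half Hc Hd Sc Sd (conj Hl1 (conj Hl2 Hl3)) Hf (conj Hx1 Hx2) He).
- apply: (half Hd Hc Sd Sc _ Hf' _ He').
  + split=> //; split; first by move=> E; apply: Hl2.
    by move=> i Hi; rewrite Hl3.
  + split; first by move=> E; apply: Hx1.
    by move=> i Hi; rewrite Hx2.
Qed.
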